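(* Assume the following hypothesis (Hypothesis H for generalized Fermat primes): for every integer $\lambda\ge 1$, $L(R,\lambda)\sim E(R,\lambda)$ as $R\to\infty$. Then for every integer $\lambda\ge 1$ there exists a bound $B_\lambda\ge 2^\lambda$ such that for every real $R>B_\lambda$ there is an integer $r\in[R,\,R(1+\lambda^2)]$ for which $r^{2^\lambda}+1$ is prime.
   Context: A generalized Fermat prime is a prime of the form $r^{2^\lambda}+1$ with integers $r\ge 2$, $\lambda\ge 1$. For real $R\ge 2$ and integer $\lambda\ge1$, $L(R,\lambda)$ denotes the number of integers $r$ with $2\le r\le R$ such that $r^{2^\lambda}+1$ is prime, and $$E(R,\lambda)=\frac{C_\lambda}{2^\lambda}\sum_{r=2}^{\lfloor R\rfloor}\frac{1}{\log r},$$ where $C_\lambda=\lim_{K\to\infty} t(K,\lambda)/u(K,\lambda)>0$ with $t(K,\lambda)=\prod_{1\le k\le K,\ k2^{\lambda+1}+1\text{ prime}}\bigl(1-\tfrac{2^\lambda}{k2^{\lambda+1}+1}\bigr)$ and $u(K,\lambda)=\prod_{p\text{ prime},\ p\le K2^{\lambda+1}+1}\bigl(1-\tfrac1p\bigr)$. Here $\log$ is the natural logarithm. *)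

(* Defs.v *)
From Stdlib Require Import Reals ZArith Znumtheory List Lia.
Open Scope R_scope.

Definition primeb (n : Z) : bool := if prime_dec n then true else false.

Definition gfermat (r : Z) (lam : nat) : Z := (r ^ (2 ^ Z.of_nat lam) + 1)%Z.

(* floor of a real, as a natural number (0 if negative) *)
Definition nfloor (x : R) : nat := Z.to_nat (Int_part x).

(* the integers r with 2 <= r <= floor R *)
Definition range2 (x : R) : list nat := seq 2 (nfloor x - 1).

Definition Lcount (x : R) (lam : nat) : nat :=
  length (filter (fun r => primeb (gfermat (Z.of_nat r) lam)) (range2 x)).

Definition Eapprox (C : R) (x : R) (lam : nat) : R :=
  C / 2 ^ lam * fold_right Rplus 0 (map (fun r => / ln (INR r)) (range2 x)).

Definition tprod (K lam : nat) : R :=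
  fold_right Rmult 1
    (map (fun k => 1 - 2 ^ lam / INR (k * 2 ^ (lam + 1) + 1))
       (filter (fun k => primeb (Z.of_nat (k * 2 ^ (lam + 1) + 1))) (seq 1 K))).

Definition uprod (K lam : nat) : R :=
  fold_right Rmult 1
    (map (fun p => 1 - / INR p)
       (filter (fun p => primeb (Z.of_nat p)) (seq 0 (K * 2 ^ (lam + 1) + 2)))).

Definition asymp (f g : R -> R) : Prop :=
  forall eps, 0 < eps -> exists x0, forall x, x >= x0 ->
    Rabs (f x / g x - 1) < eps.

Definition HypothesisH : Prop :=
  forall lam : nat, (1 <= lam)%nat ->
    exists C : R, 0 < C /\ Un_cv (fun K => tprod K lam / uprod K lam) C /\
      asymp (fun x => INR (Lcount x lam)) (fun x => Eapprox C x lam).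

(* Main.v *)
Require Import Defs.
From Stdlib Require Import Reals ZArith Znumtheory List Lia Lra.
Open Scope R_scope.

Definition ff (r : nat) : R := / ln (INR r).
Definition hh (N : nat) : R := fold_right Rplus 0 (map ff (seq 2 (N - 1))).

Lemma fold_shift (l : list R) (a : R) :
  fold_right Rplus a l = fold_right Rplus 0 l + a.
Proof. induction l; simpl; [ring | rewrite IHl; ring]. Qed.

Lemma hh_step N : (1 <= N)%nat -> hh (S N) = hh N + ff (S N).
Proof.
  intros HN. unfold hh.
  replace (S N - 1)%nat with (S (N - 1)) by lia.
  rewrite seq_S, map_app, fold_right_app. simpl.
  replace (S (S (N - 1))) with (S N) by lia.
  rewrite fold_shift. ring.
Qed.

Lemma lnpos r : (2 <= r)%nat -> 0 < ln (INR r).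
Proof.
  intros H. rewrite <- ln_1. apply ln_increasing; [lra|].
  apply le_INR in H. simpl in H. lra.
Qed.

Lemma ff_pos r : (2 <= r)%nat -> 0 < ff r.
Proof. intros H. unfold ff. apply Rinv_0_lt_compat, lnpos, H. Qed.

Lemma ln_le' x y : 0 < x -> x <= y -> ln x <= ln y.
Proof.
  intros Hx Hxy. destruct (Rle_lt_or_eq_dec _ _ Hxy) as [H|H].
  - left. apply ln_increasing; auto.
  - subst; right; reflexivity.
Qed.

Lemma ff_anti m n : (2 <= m)%nat -> (m <= n)%nat -> ff n <= ff m.
Proof.
  intros Hm Hmn. unfold ff. apply Rinv_le_contravar. apply lnpos, Hm.
  apply ln_le'. apply le_INR in Hm. simpl in Hm. lra. apply le_INR, Hmn.
Qed.

Lemma hh_mono N k : (1 <= N)%nat -> hh N <= hh (N + k).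
Proof.
  intros HN. induction k.
  - rewrite Nat.add_0_r; lra.
  - replace (N + S k)%nat with (S (N + k)) by lia.
    rewrite hh_step by lia. assert (0 < ff (S (N + k))) by (apply ff_pos; lia). lra.
Qed.

Lemma hh_lower n : INR n * ff (S n) <= hh (S n).
Proof.
  induction n.
  - simpl. unfold hh. simpl. lra.
  - rewrite hh_step by lia.
    assert (H1 : INR n * ff (S (S n)) <= INR n * ff (S n)).
    { destruct n. simpl; lra. apply Rmult_le_compat_l. apply pos_INR.
      apply ff_anti; lia. }
    rewrite S_INR. lra.
Qed.

Lemma hh_nonneg N : (1 <= N)%nat -> 0 <= hh N.
Proof.
  intros HN. destruct N. lia.
  pose proof (hh_lower N). destruct N. simpl in *; lra.
  assert (0 < ff (S (S N))) by (apply ff_pos; lia).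
  pose proof (pos_INR (S N)). nra.
Qed.

Lemma ln_lt_self y : 0 < y -> ln y < y.
Proof.
  intros Hy. pose proof (exp_ineq1 y ltac:(lra)).
  rewrite <- (ln_exp y) at 2. apply ln_increasing; lra.
Qed.

Lemma hh_diverge K : exists N0, forall N, (N0 <= N)%nat -> K <= hh N.
Proof.
  destruct (INR_archimed 1 (16 * K * K + 2)) as [N0 HN0]; [lra|].
  exists N0. intros N HN.
  apply le_INR in HN.
  assert (HN2 : 2 <= INR N) by nra.
  assert (HNnat : (2 <= N)%nat).
  { destruct N as [|[|N]]; simpl in HN2; try lra. lia. }
  set (s := sqrt (INR N)).
  assert (Hs : 0 < s) by (apply sqrt_lt_R0; lra).
  assert (Hss : s * s = INR N) by (apply sqrt_sqrt; lra).
  assert (Hln : ln (INR N) < 2 * s).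
  { rewrite <- Hss. rewrite ln_mult by lra. pose proof (ln_lt_self s Hs). lra. }
  assert (Hlnp : 0 < ln (INR N)) by (apply lnpos; lia).
  assert (Hf : / (2 * s) <= ff N).
  { unfold ff. apply Rinv_le_contravar; lra. }
  destruct N as [|N]. lia.
  pose proof (hh_lower N) as HL.
  rewrite S_INR in Hss, HN2, HN.
  assert (Hpos : 0 <= / (2 * s)) by (left; apply Rinv_0_lt_compat; lra).
  assert (HINR : INR N >= s * s / 2) by lra.
  assert (H3 : s * s / 2 * / (2 * s) <= INR N * ff (S N)).
  { apply Rmult_le_compat; try lra; nra. }
  assert (H4 : s * s / 2 * / (2 * s) = s / 4) by (field; lra).
  assert (4 * K <= s) by nra.
  lra.
Qed.

Lemma key_ineq m : (4 <= m)%nat -> 5 / 4 * ff m <= 2 * ff (2 * m).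
Proof.
  intros Hm. unfold ff.
  rewrite mult_INR. replace (INR 2) with 2 by (simpl; ring).
  assert (Hm' : 4 <= INR m) by (apply le_INR in Hm; simpl in Hm; lra).
  rewrite ln_mult by lra.
  set (A := ln 2). set (B := ln (INR m)).
  assert (HA : 0 < A) by (unfold A; rewrite <- ln_1; apply ln_increasing; lra).
  assert (HB : 0 < B) by (apply lnpos; lia).
  assert (H5 : 5 * A <= 3 * B).
  { unfold A, B.
    replace (5 * ln 2) with (ln (2 ^ 5)) by (rewrite ln_pow by lra; simpl; ring).
    replace (3 * ln (INR m)) with (ln (INR m ^ 3)) by (rewrite ln_pow by lra; simpl; ring).
    apply ln_le'. simpl; lra. simpl. nra. }
  assert (E : 2 * / (A + B) - 5 / 4 * / B = (3 * B - 5 * A) * / (4 * B * (A + B)))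
    by (field; lra).
  assert (0 <= (3 * B - 5 * A) * / (4 * B * (A + B))).
  { apply Rmult_le_pos. lra. left; apply Rinv_0_lt_compat. nra. }
  lra.
Qed.

Lemma doubling k : 5/4 * hh (3 + k) - 5/4 * (ff 2 + ff 3) <= hh (2 * (3 + k)).
Proof.
  induction k.
  - assert (hh 3 = ff 2 + ff 3) by (unfold hh; simpl; ring).
    rewrite Nat.add_0_r, H. pose proof (hh_nonneg (2 * 3) ltac:(lia)). lra.
  - replace (3 + S k)%nat with (S (3 + k)) by lia.
    replace (2 * S (3 + k))%nat with (S (S (2 * (3 + k)))) by lia.
    rewrite (hh_step (S (2 * (3 + k)))) by lia.
    rewrite (hh_step (2 * (3 + k))) by lia.
    rewrite (hh_step (3 + k)) by lia.
    pose proof (ff_anti (S (2 * (3 + k))) (S (S (2 * (3 + k)))) ltac:(lia) ltac:(lia)).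
    pose proof (key_ineq (S (3 + k)) ltac:(lia)).
    replace (2 * S (3 + k))%nat with (S (S (2 * (3 + k)))) in H0 by lia.
    lra.
Qed.

Lemma nfloor_spec x : 0 <= x -> x - 1 < INR (nfloor x) <= x.
Proof.
  intros Hx. unfold nfloor. destruct (base_Int_part x) as [H1 H2].
  assert (Hz : (0 <= Int_part x)%Z).
  { assert (-1 < IZR (Int_part x)) by lra.
    apply lt_IZR in H. lia. }
  rewrite INR_IZR_INZ, Z2Nat.id by exact Hz. lra.
Qed.

Lemma filter_nonempty (p : nat -> bool) l :
  (0 < length (filter p l))%nat -> exists r, In r l /\ p r = true.
Proof.
  intros H. destruct (filter p l) as [|r t] eqn:E. simpl in H; lia.
  exists r. apply filter_In. rewrite E. left; auto.
Qed.

Theorem proposition4p3 :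
  HypothesisH ->
  forall lam : nat, (1 <= lam)%nat ->
    exists B : R, B >= 2 ^ lam /\
      forall x : R, x > B ->
        exists r : Z, x <= IZR r <= x * (1 + INR lam ^ 2) /\
          prime (gfermat r lam).
Proof.
  intros HH lam Hlam.
  destruct (HH lam Hlam) as [C [HC [_ Has]]].
  destruct (Has (1/20) ltac:(lra)) as [x0 Hx0].
  set (c0 := ff 2 + ff 3).
  assert (Hc0 : 0 < c0) by (unfold c0; pose proof (ff_pos 2 ltac:(lia)); pose proof (ff_pos 3 ltac:(lia)); lra).
  destruct (hh_diverge (10 * c0 + 1)) as [N0 HN0].
  set (N1 := Nat.max N0 3).
  assert (Hp2 : 0 < 2 ^ lam) by (apply pow_lt; lra).
  exists (Rmax (2 ^ lam) (Rmax x0 (INR N1 + 1))).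
  split. { pose proof (Rmax_l (2 ^ lam) (Rmax x0 (INR N1 + 1))). lra. }
  intros x Hx.
  pose proof (Rmax_l (2 ^ lam) (Rmax x0 (INR N1 + 1))).
  pose proof (Rmax_r (2 ^ lam) (Rmax x0 (INR N1 + 1))).
  pose proof (Rmax_l x0 (INR N1 + 1)). pose proof (Rmax_r x0 (INR N1 + 1)).
  assert (Hxpos : 0 < x) by lra.
  set (y := x * (1 + INR lam ^ 2)).
  assert (Hlr : 1 <= INR lam) by (apply le_INR in Hlam; simpl in Hlam; lra).
  assert (Hy : 2 * x <= y) by (unfold y; assert (1 <= INR lam ^ 2) by (simpl; nra); nra).
  set (N := nfloor x). set (M := nfloor y).
  destruct (nfloor_spec x ltac:(lra)) as [HN1 HN2]. fold N in HN1, HN2.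
  destruct (nfloor_spec y ltac:(lra)) as [HM1 HM2]. fold M in HM1, HM2.
  assert (HNN1 : (N1 < N)%nat) by (apply INR_lt; lra).
  assert (HNM : (2 * N <= M)%nat).
  { assert ((2 * N < M + 1)%nat); [|lia]. apply INR_lt. rewrite mult_INR, plus_INR. simpl. lra. }
  assert (HN3 : (3 <= N)%nat) by lia.
  assert (HNb : (N0 <= N)%nat) by lia.
  pose proof (HN0 N HNb) as HhN.
  assert (Hd : 5/4 * hh N - 5/4 * c0 <= hh (2 * N)).
  { pose proof (doubling (N - 3)). replace (3 + (N - 3))%nat with N in H3 by lia. exact H3. }
  assert (Hm : hh (2 * N) <= hh M).
  { replace M with (2 * N + (M - 2 * N))%nat by lia. apply hh_mono. lia. }
  assert (HhM : 9/8 * hh N <= hh M) by lra.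
  set (a := C / 2 ^ lam).
  assert (Ha : 0 < a) by (unfold a; apply Rdiv_lt_0_compat; lra).
  assert (EEx : Eapprox C x lam = a * hh N) by reflexivity.
  assert (EEy : Eapprox C y lam = a * hh M) by reflexivity.
  assert (HxA : x >= x0) by lra.
  assert (HyA : y >= x0) by lra.
  pose proof (Hx0 x HxA) as Ax. pose proof (Hx0 y HyA) as Ay.
  simpl in Ax, Ay. rewrite EEx in Ax. rewrite EEy in Ay.
  apply Rabs_def2 in Ax. apply Rabs_def2 in Ay.
  assert (HEx : 0 < a * hh N) by nra.
  assert (HEy : 0 < a * hh M) by nra.
  set (Lx := INR (Lcount x lam)) in *. set (Ly := INR (Lcount y lam)) in *.
  assert (Lx = Lx / (a * hh N) * (a * hh N)) by (field; lra).
  assert (Ly = Ly / (a * hh M) * (a * hh M)) by (field; lra).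
  assert (HLx : Lx < 21/20 * (a * hh N)) by nra.
  assert (HLy : 19/20 * (a * hh M) < Ly) by nra.
  assert (Hlt : Lx < Ly) by nra.
  unfold Lx, Ly in Hlt. apply INR_lt in Hlt.
  unfold Lcount, range2 in Hlt. fold N M in Hlt.
  replace (M - 1)%nat with ((N - 1) + (M - N))%nat in Hlt by lia.
  rewrite seq_app, filter_app, length_app in Hlt.
  destruct (filter_nonempty (fun r : nat => primeb (gfermat (Z.of_nat r) lam)) (seq (2 + (N - 1)) (M - N))) as [r [Hr Hp]].
  { lia. }
  apply in_seq in Hr.
  exists (Z.of_nat r). rewrite <- INR_IZR_INZ.
  split.
  - assert (Hr1 : INR (N + 1) <= INR r) by (apply le_INR; lia).
    assert (Hr2 : INR r <= INR M) by (apply le_INR; lia).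
    rewrite plus_INR in Hr1. simpl in Hr1. fold y. lra.
  - unfold primeb in Hp. destruct (prime_dec _); [assumption|discriminate].
Qed.
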